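(* Let $A$ and $G$ be $n\times n$ symmetric positive definite matrices with $A\preceq G$, and let $u\in\mathbb{R}^n$ satisfy $u^\top(G-A)u>0$. Then $\mathrm{rank}(\mathrm{SR1}(A,G,u)-A)=\mathrm{rank}(G-A)-1$ and $\kappa(\mathrm{SR1}(A,G,u)-A)\le\kappa(G-A)$.
   Context: For a positive semidefinite matrix $B$, $\kappa(B)=\lambda_{\max}(B)/\lambda_{\min}(B)$, where $\lambda_{\min}(B)$ is the smallest nonzero eigenvalue of $B$. $\mathrm{SR1}(A,G,u)=G$ if $(G-A)u=0$, and otherwise $\mathrm{SR1}(A,G,u)=G-\frac{(G-A)uu^\top(G-A)}{u^\top(G-A)u}$. *)

(* Defs.v *)
From HB Require Import structures.
From mathcomp Require Import all_boot all_order all_algebra.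
From mathcomp Require Import boolp classical_sets reals.
Set Implicit Arguments. Unset Strict Implicit. Unset Printing Implicit Defensive.
Import Order.TTheory GRing.Theory Num.Theory.
Local Open Scope ring_scope.
Local Open Scope classical_set_scope.

Section Defs.
Variable R : realType.

Definition qform n (B : 'M[R]_n) (v : 'cV[R]_n) : R := (v^T *m B *m v) 0 0.

Definition symmetric n (B : 'M[R]_n) : Prop := B^T = B.

Definition posdef n (B : 'M[R]_n) : Prop :=
  symmetric B /\ forall v : 'cV[R]_n, v != 0 -> 0 < qform B v.

Definition psd n (B : 'M[R]_n) : Prop :=
  symmetric B /\ forall v : 'cV[R]_n, 0 <= qform B v.

Definition loewner_le n (A G : 'M[R]_n) : Prop := psd (G - A).

Definition lambda_max n (B : 'M[R]_n) : R := sup [set a | eigenvalue B a].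
Definition lambda_min_nz n (B : 'M[R]_n) : R :=
  inf [set a | eigenvalue B a /\ a != 0].

(* condition number; for B = 0 it evaluates to 0 (sup/inf of set0 are 0) *)
Definition kappa n (B : 'M[R]_n) : R := lambda_max B / lambda_min_nz B.

Definition SR1 n (A G : 'M[R]_n) (u : 'cV[R]_n) : 'M[R]_n :=
  if (G - A) *m u == 0 then G
  else G - (qform (G - A) u)^-1 *: ((G - A) *m u *m u^T *m (G - A)).

End Defs.

(* Main.v *)
Require Import Defs.
From HB Require Import structures.
From mathcomp Require Import all_boot all_order all_algebra.
From mathcomp Require Import boolp classical_sets reals.
From mathcomp Require Import complex.
From mathcomp Require Import ring.
From mathcomp Require Import zify.
Import Order.TTheory GRing.Theory Num.Theory.
Local Open Scope ring_scope.

Definition reC {R : realType} (z : R[i]) : R := complex.Re z.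
Arguments reC : simpl never.

Section Spec.
Variable R : realType.
Variable n : nat.
Local Notation C := R[i].
Local Notation toC := (real_complex R).

Definition dot (x y : 'cV[R]_n) : R := (x^T *m y) 0 0.

Lemma toC_real (r : R) : toC r \is Num.real.
Proof. by rewrite complex_real. Qed.

Lemma conj_toC (r : R) : (toC r)^* = toC r.
Proof. exact: conj_Creal (toC_real r). Qed.

Lemma toC_dot (x z : 'cV[R]_n) : toC (dot x z) = ((map_mx toC x)^T *m (map_mx toC z)) 0 0.
Proof. by rewrite /dot map_trmx -map_mxM [RHS]mxE. Qed.

Lemma spec (D : 'M[R]_n) : D^T = D ->
 exists d : 'I_n -> R, exists F : 'cV[R]_n -> 'I_n -> R,
 [/\ forall i, eigenvalue D (d i), forall x i, 0 <= F x i,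
   forall x, dot x x = \sum_i F x i,
   forall x, dot x (D *m x) = \sum_i d i * F x i &
   forall x, dot (D *m x) (D *m x) = \sum_i d i ^+ 2 * F x i].
Proof.
move=> Dsym.
set Dc := map_mx toC D.
have DcT : Dc^T = Dc by rewrite /Dc map_trmx Dsym.
have Dcstar : map_mx Num.conj Dc^T = Dc.
  by rewrite DcT; apply/matrixP => i j; rewrite !mxE conj_toC.
have Dnormal : Dc \is normalmx by apply/normalmxP; rewrite Dcstar.
have Dherm : Dc \is hermsymmx by apply/is_hermitianmxP; rewrite expr0 scale1r Dcstar.
set P := spectralmx Dc. set sp := spectral_diag Dc.
have Pu : P \is unitarymx := spectral_unitarymx Dc.
have PPt : P *m (map_mx Num.conj P^T) = 1%:M by apply/unitarymxP.
have PtP : (map_mx Num.conj P^T) *m P = 1%:M by rewrite -invmx_unitary // mulVmx // spectral_unit.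
have DcE : Dc = (map_mx Num.conj P^T) *m diag_mx sp *m P.
  by rewrite -invmx_unitary //; exact/orthomx_spectralP.
have spreal : forall i, sp 0 i \is Num.real.
  by move: (hermitian_spectral_diag_real Dherm) => /mxOverP H i; exact: H.
have spE : forall i, toC (reC (sp 0 i)) = sp 0 i by move=> i; rewrite /reC; exact: RRe_real.
pose y (x : 'cV[R]_n) := P *m (map_mx toC x).
have FE : forall x i, toC (reC (`|y x i 0| ^+ 2)) = `|y x i 0| ^+ 2.
  by move=> x i; rewrite /reC; apply: RRe_real; rewrite rpredX // normr_real.
have quad : forall (s : 'rV[C]_n) x,
   ((map_mx toC x)^T *m ((map_mx Num.conj P^T) *m diag_mx s *m P) *m (map_mx toC x)) 0 0
   = \sum_i s 0 i * `|y x i 0| ^+ 2.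
  move=> s x.
  have H : (map_mx toC x)^T *m (map_mx Num.conj P^T) = map_mx Num.conj (y x)^T.
    rewrite /y trmx_mul map_mxM; congr (_ *m _).
    by apply/matrixP => i j; rewrite !mxE; exact/esym/conj_toC.
  rewrite !mulmxA H -!mulmxA mxE; apply: eq_bigr => j _.
  rewrite mul_diag_mx !mxE normCK /y; ring.
exists (fun i => reC (sp 0 i)).
exists (fun x i => reC (`|y x i 0| ^+ 2)).
split.
- move=> i; rewrite -(eigenvalue_map toC) /= spE; apply/eigenvalueP; exists (row i P).
    rewrite -row_mul.
    have -> : P *m Dc = diag_mx sp *m P by rewrite DcE !mulmxA PPt mul1mx.
    by rewrite mul_diag_mx; apply/rowP => j; rewrite !mxE.
  apply/eqP => H.
  have : row i (P *m (map_mx Num.conj P^T)) = row i 1%:M by rewrite PPt.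
  rewrite row_mul H mul0mx => /rowP/(_ i); rewrite !mxE eqxx /= => /eqP.
  by rewrite eq_sym oner_eq0.
- move=> x i; rewrite -(@ler0c R) FE; exact: exprn_ge0.
- move=> x; apply: (@complexI R); rewrite toC_dot rmorph_sum.
  rewrite -[X in (X *m _) 0 0](mulmx1 ((map_mx toC x)^T)).
  have -> : (1%:M : 'M[C]_n) = (map_mx Num.conj P^T) *m diag_mx (const_mx 1) *m P.
    by rewrite diag_const_mx mulmx1 PtP.
  rewrite quad; apply: eq_bigr => i _; by rewrite mxE mul1r -FE.
- move=> x; apply: (@complexI R); rewrite toC_dot rmorph_sum.
  rewrite map_mxM -/Dc mulmxA DcE quad; apply: eq_bigr => i _.
  by rewrite rmorphM /= FE spE.
- move=> x; apply: (@complexI R); rewrite toC_dot rmorph_sum.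
  rewrite map_mxM -/Dc trmx_mul DcT mulmxA.
  have -> : (map_mx toC x)^T *m Dc *m Dc = (map_mx toC x)^T *m (Dc *m Dc) by rewrite mulmxA.
  have -> : Dc *m Dc = (map_mx Num.conj P^T) *m diag_mx (\row_i (sp 0 i ^+ 2)) *m P.
    rewrite {1}DcE -!mulmxA; congr (_ *m _).
    have -> : P *m Dc = diag_mx sp *m P by rewrite DcE !mulmxA PPt mul1mx.
    rewrite mulmxA; congr (_ *m _).
    rewrite mul_diag_mx; apply/matrixP => i j; rewrite !mxE.
    by rewrite mulrnAr -expr2.
  rewrite quad; apply: eq_bigr => i _.
  by rewrite rmorphM rmorphXn /= FE spE mxE.
Qed.
End Spec.
Arguments dot {R n}.
Section Dot.
Context {R : realType}.
Context {n : nat}.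
Implicit Types x y z : 'cV[R]_n.

Lemma dotC x y : dot x y = dot y x.
Proof. by rewrite /dot !mxE; apply: eq_bigr => i _; rewrite !mxE mulrC. Qed.

Lemma dotDr x y z : dot x (y + z) = dot x y + dot x z.
Proof. by rewrite /dot mulmxDr mxE. Qed.

Lemma dotNr x y : dot x (- y) = - dot x y.
Proof. by rewrite /dot mulmxN mxE. Qed.

Lemma dotBr x y z : dot x (y - z) = dot x y - dot x z.
Proof. by rewrite dotDr dotNr. Qed.

Lemma dotZr x k y : dot x (k *: y) = k * dot x y.
Proof. by rewrite /dot -scalemxAr mxE. Qed.

Lemma dotBl x y z : dot (y - z) x = dot y x - dot z x.
Proof. by rewrite dotC dotBr !(dotC x). Qed.

Lemma dotZl x k y : dot (k *: y) x = k * dot y x.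
Proof. by rewrite dotC dotZr dotC. Qed.

Lemma dot_mul x (M : 'M[R]_n) y : dot x (M *m y) = dot (M^T *m x) y.
Proof. by rewrite /dot trmx_mul trmxK mulmxA. Qed.

Lemma dot_sum x y : dot x y = \sum_i x i 0 * y i 0.
Proof. by rewrite /dot mxE; apply: eq_bigr => i _; rewrite mxE. Qed.

Lemma dot_ge0 x : 0 <= dot x x.
Proof. by rewrite dot_sum; apply: sumr_ge0 => i _; rewrite -expr2 sqr_ge0. Qed.

Lemma dot_eq0 x : dot x x = 0 -> x = 0.
Proof.
rewrite dot_sum => /psumr_eq0P H; apply/matrixP => i j.
rewrite (ord1 j) mxE; apply/eqP; rewrite -sqrf_eq0 expr2; apply/eqP.
by apply: H => // k _; rewrite -expr2 sqr_ge0.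
Qed.

Lemma dot_gt0 {x} : x != 0 -> 0 < dot x x.
Proof.
move=> xn0; rewrite lt_def dot_ge0 andbT; apply/eqP => /dot_eq0 H.
by rewrite H eqxx in xn0.
Qed.

Lemma wwT (w x : 'cV[R]_n) : (w *m w^T) *m x = dot w x *: w.
Proof. by rewrite -mulmxA [w^T *m x]mx11_scalar mul_mx_scalar. Qed.

Lemma qformE (M : 'M[R]_n) x : qform M x = dot x (M *m x).
Proof. by rewrite /qform /dot mulmxA. Qed.

Lemma sym_eigen {M : 'M[R]_n} {a} : M^T = M -> eigenvalue M a ->
  exists2 x : 'cV[R]_n, x != 0 & M *m x = a *: x.
Proof.
move=> MT /eigenvalueP [v vM vn0]; exists v^T.
  by apply: contraNneq vn0 => H; rewrite -[v]trmxK H trmx0.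
by rewrite -{1}MT -trmx_mul vM linearZ.
Qed.

Lemma psd_eig_ge0 {M : 'M[R]_n} {a} : psd M -> eigenvalue M a -> 0 <= a.
Proof.
move=> [MT Mq] /(sym_eigen MT) [x xn0 Mx].
have := Mq x; rewrite qformE Mx dotZr pmulr_lge0 //; exact: dot_gt0.
Qed.
End Dot.
Section Bounds.
Context {R : realType}.
Context {n : nat}.
Context {D : 'M[R]_n}.
Context {d : 'I_n -> R}.
Context {F : 'cV[R]_n -> 'I_n -> R}.
Hypothesis HF : forall x i, 0 <= F x i.
Hypothesis H0 : forall x, dot x x = \sum_i F x i.
Hypothesis H1 : forall x, dot x (D *m x) = \sum_i d i * F x i.
Hypothesis H2 : forall x, dot (D *m x) (D *m x) = \sum_i d i ^+ 2 * F x i.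

Lemma exists_F_neq0 {x} : x != 0 -> exists i, F x i != 0.
Proof.
move=> xn0; case: (boolP [exists i, F x i != 0]) => [/existsP //|/existsPn Hn].
move: (dot_gt0 xn0); rewrite H0 big1 ?ltxx // => i _.
by apply/eqP; move: (Hn i); rewrite negbK.
Qed.

Lemma eig_in a : D^T = D -> eigenvalue D a -> exists i, d i = a.
Proof.
move=> DT /(sym_eigen DT) [x xn0 Dx].
have S : \sum_i (d i - a)^+2 * F x i = 0.
  transitivity (dot (D *m x) (D *m x) - 2 * a * dot x (D *m x) + a^+2 * dot x x).
    rewrite H2 H1 H0 !mulr_sumr -sumrB -big_split /=; apply: eq_bigr => i _; ring.
  rewrite Dx dotZl !dotZr; ring.
have Hge : forall i, true -> 0 <= (d i - a)^+2 * F x i.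
  by move=> i _; rewrite mulr_ge0 ?sqr_ge0.
have [i Fi] := exists_F_neq0 xn0.
exists i; have Z := psumr_eq0P Hge S; move: (Z i isT) => /eqP.
rewrite mulf_eq0 (negbTE Fi) orbF sqrf_eq0 subr_eq0 => /eqP //.
Qed.

Lemma up_bound x a : x != 0 -> a * dot x x <= dot x (D *m x) ->
  exists i, a <= d i.
Proof.
move=> xn0 Hle.
case: (boolP [exists i, a <= d i]) => [/existsP //|/existsPn Hn].
have Hlt : forall i, d i < a by move=> i; rewrite ltNge Hn.
have S : \sum_i (a - d i) * F x i = a * dot x x - dot x (D *m x).
  by rewrite H0 H1 mulr_sumr -sumrB; apply: eq_bigr => i _; ring.
have Hge : forall i, true -> 0 <= (a - d i) * F x i.
  by move=> i _; rewrite mulr_ge0 // subr_ge0 ltW.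
have S0 : \sum_i (a - d i) * F x i = 0.
  by apply/le_anti; rewrite sumr_ge0 // andbT S subr_le0.
have [i Fi] := exists_F_neq0 xn0.
have Z := psumr_eq0P Hge S0; move: (Z i isT) => /eqP.
by rewrite mulf_eq0 (negbTE Fi) orbF subr_eq0 eq_sym (lt_eqF (Hlt i)).
Qed.

Lemma low_bound y a : (forall i, 0 <= d i) -> D *m y != 0 ->
  dot (D *m y) (D *m y) = a * dot y (D *m y) ->
  exists i, d i != 0 /\ d i <= a.
Proof.
move=> Hd Dyn0 Heq.
case: (boolP [exists i, (d i != 0) && (d i <= a)]).
  by move=> /existsP [i /andP[]]; exists i.
move=> /existsPn Hn.
have Hlt : forall i, d i != 0 -> a < d i.
  by move=> i dn0; move: (Hn i); rewrite dn0 /= -ltNge.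
have Hge : forall i, true -> 0 <= d i * (d i - a) * F y i.
  move=> i _; case: (eqVneq (d i) 0) => [->|dn0]; first by rewrite !mul0r.
  by rewrite mulr_ge0 // mulr_ge0 // subr_ge0 ltW // Hlt.
have S : \sum_i d i * (d i - a) * F y i = 0.
  transitivity (dot (D *m y) (D *m y) - a * dot y (D *m y)); last first.
    by rewrite Heq subrr.
  by rewrite H2 H1 mulr_sumr -sumrB; apply: eq_bigr => i _; ring.
have Z := psumr_eq0P Hge S.
have : dot (D *m y) (D *m y) = 0.
  rewrite H2 big1 // => i _; case: (eqVneq (d i) 0) => [->|dn0].
    by rewrite expr2 !mul0r.
  move: (Z i isT) => /eqP; rewrite !mulf_eq0 (negbTE dn0) /= subr_eq0.
  by rewrite (gt_eqF (Hlt i dn0)) /= => /eqP ->; rewrite mulr0.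
by move=> /dot_eq0 H; rewrite H eqxx in Dyn0.
Qed.
End Bounds.
Section SR1sec.
Context {R : realType} {n : nat}.
Variables (D : 'M[R]_n) (u : 'cV[R]_n).
Hypothesis DT : D^T = D.
Let c := dot u (D *m u).
Hypothesis cpos : 0 < c.
Let w := D *m u.
Let E := D - c^-1 *: (w *m w^T).

Lemma c_neq0 : c != 0. Proof. by rewrite gt_eqF. Qed.

Lemma ET : E^T = E.
Proof. by rewrite /E raddfB /= linearZ /= trmx_mul trmxK DT. Qed.

Lemma ExE (x : 'cV[R]_n) : E *m x = D *m x - (c^-1 * dot w x) *: w.
Proof. by rewrite /E mulmxBl -scalemxAl wwT scalerA. Qed.

Lemma Eu : E *m u = 0.
Proof.
rewrite ExE dotC -/w -/c mulVf ?c_neq0 // scale1r subrr //.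
Qed.

Lemma dot0l (x : 'cV[R]_n) : dot 0 x = 0.
Proof. by rewrite /dot trmx0 mul0mx mxE. Qed.

Lemma E_eig a (x : 'cV[R]_n) : a != 0 -> x != 0 -> E *m x = a *: x ->
  a * dot x x <= dot x (D *m x) /\
  exists y, D *m y != 0 /\ dot (D *m y) (D *m y) = a * dot y (D *m y).
Proof.
move=> an0 xn0 Exa; split.
  have : dot x (E *m x) = a * dot x x by rewrite Exa dotZr.
  rewrite ExE dotBr dotZr => <-.
  rewrite gerBl (dotC x w) -mulrA; apply: mulr_ge0.
    by rewrite invr_ge0 ltW.
  by have := sqr_ge0 (dot w x); rewrite expr2.
pose y := a^-1 *: x - (c^-1 * a^-1 * dot w x) *: u.
have DxE : D *m x = a *: x + (c^-1 * dot w x) *: w by rewrite -Exa ExE subrK.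
have Dy : D *m y = x.
  rewrite /y mulmxBr -!scalemxAr -/w DxE scalerDr !scalerA mulVf // scale1r.
  have -> : a^-1 * (c^-1 * dot w x) = c^-1 * a^-1 * dot w x by ring.
  by rewrite addrK.
have ux : dot u x = 0.
  have : dot u (E *m x) = 0 by rewrite dot_mul ET Eu dot0l.
  by rewrite Exa dotZr => /eqP; rewrite mulf_eq0 (negbTE an0) /= => /eqP.
exists y; rewrite Dy; split => //.
by rewrite /y dotBl !dotZl ux mulr0 subr0 mulrA mulfV // mul1r.
Qed.

Lemma rank_E : \rank E = (\rank D).-1.
Proof.
set K := kermx D.
have wT : w^T = u^T *m D by rewrite /w trmx_mul DT.
have wn0 : w != 0.
  by apply: contraTneq cpos => H; rewrite /c -/w H /dot mulmx0 mxE ltxx.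
have un0 : u != 0.
  by apply: contraNneq wn0 => H; rewrite /w H mulmx0.
have s1 : (K <= kermx E)%MS.
  rewrite sub_kermx /E mulmxBr -scalemxAr /w !mulmxA mulmx_ker !mul0mx.
  by rewrite scaler0 subr0.
have s2 : (u^T <= kermx E)%MS.
  by rewrite sub_kermx -ET -trmx_mul Eu trmx0.
have s3 : (kermx E <= K + u^T)%MS.
  set KE := kermx E.
  have H : KE *m E = 0 := mulmx_ker E.
  pose s := c^-1 *: (KE *m w).
  have H2 : (KE - s *m u^T) *m D = 0.
    have HE : KE *m D = s *m w^T.
      by move: H; rewrite /E mulmxBr -scalemxAr mulmxA -scalemxAl => /eqP; rewrite subr_eq0 => /eqP.
    by rewrite mulmxBl HE -mulmxA -wT subrr.
  rewrite -[KE](subrK (s *m u^T)); apply: addmx_sub_adds.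
    by rewrite sub_kermx H2.
  exact: submxMl.
have nK : ~~ (u^T <= K)%MS.
  by rewrite sub_kermx -wT trmx_eq0.
have rKE : \rank (kermx E) = (\rank K).+1.
  have -> : \rank (kermx E) = \rank (K + u^T)%MS.
    by apply: eqmx_rank; rewrite s3 addsmx_sub s1 s2.
  apply/eqP; rewrite eqn_leq; apply/andP; split.
    have := (mxrank_adds_leqif K u^T).1.
    by rewrite rank_rV trmx_eq0 un0 addn1.
  apply: rank_ltmx; rewrite ltmxE addsmxSl /=.
  by apply: contra nK => H; apply: submx_trans H; exact: addsmxSr.
move: rKE; rewrite !mxrank_ker.
have := rank_leq_col E; have := rank_leq_col D.
have : (0 < \rank D)%N.
  rewrite lt0n mxrank_eq0; apply: contra nK => /eqP D0.
  by rewrite /K D0 kermx0 submx1.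
lia.
Qed.
End SR1sec.
Local Open Scope classical_set_scope.
Lemma inf_ge0 {R : realType} (S : set R) : (forall x, S x -> 0 <= x) -> 0 <= inf S.
Proof.
move=> H; have [->|ne] := eqVneq S set0; first by rewrite inf0.
by apply: lb_le_inf => //; apply/set0P.
Qed.

Local Open Scope ring_scope.
Theorem lemma3 (R : realType) (n : nat) (A G : 'M[R]_n) (u : 'cV[R]_n) :
  posdef A -> posdef G -> loewner_le A G -> 0 < qform (G - A) u ->
  \rank (SR1 A G u - A) = (\rank (G - A)).-1 :> nat /\
  kappa (SR1 A G u - A) <= kappa (G - A).
Proof.
move=> _ _ [DT Dq] qpos.
set D := G - A.
have DT' : D^T = D := DT.
have Dpsd : psd D by split.
have cpos : 0 < dot u (D *m u) by rewrite -qformE.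
have Dun0 : D *m u != 0.
  by apply: contraTneq qpos => H; rewrite qformE H /dot mulmx0 mxE ltxx.
have SRE : SR1 A G u - A = D - (dot u (D *m u))^-1 *: (D *m u *m (D *m u)^T).
  rewrite /SR1 -/D (negbTE Dun0) qformE trmx_mul DT' !mulmxA.
  by rewrite addrAC.
rewrite SRE; split; first exact: rank_E.
set E := D - _.
have ETE : E^T = E := ET D u DT'.
have [d [F [Hev HF H0 H1 H2]]] := spec _ _ _ DT'.
have Hd : forall i, 0 <= d i := fun i => psd_eig_ge0 Dpsd (Hev i).
have HSD : forall a, eigenvalue D a -> exists i, d i = a.
  by move=> a; apply: (eig_in HF H0 H1 H2).
have HSE : forall a, eigenvalue E a -> a != 0 ->
    (exists i, a <= d i) /\ (exists j, d j != 0 /\ d j <= a).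
  move=> a /(sym_eigen ETE) [x xn0 Ex] an0.
  have [up [y [Dyn0 Heq]]] := E_eig D u DT' cpos a x an0 xn0 Ex.
  split; first exact: (up_bound HF H0 H1 x a xn0 up).
  exact: (low_bound HF H1 H2 y a Hd Dyn0 Heq).
have un0 : u != 0 by apply: contraNneq Dun0 => ->; rewrite mulmx0.
have [i0 _] : exists i : 'I_n, True.
  by move/matrix0Pn: un0 => [i [j _]]; exists i.
have E0 : eigenvalue E 0.
  apply/eigenvalueP; exists u^T; last by rewrite trmx_eq0.
  rewrite scale0r -ETE -trmx_mul.
  have -> : E *m u = 0 by rewrite /E; exact: Eu.
  by rewrite trmx0.
pose M := \big[Order.max/0]_i d i.
have ubD : forall a, eigenvalue D a -> a <= M.
  by move=> a /HSD [i <-]; exact: le_bigmax.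
have hubD : has_ubound [set a | eigenvalue D a] by exists M => a; exact: ubD.
set sD := sup [set a | eigenvalue D a].
have le_sD : forall a, eigenvalue D a -> a <= sD by move=> a Ha; exact: ub_le_sup.
have sD_ge0 : 0 <= sD by apply: le_trans (le_sD _ (Hev i0)).
have ubE : forall a, eigenvalue E a -> a <= sD.
  move=> a Ea; have [->|an0] := eqVneq a 0; first by [].
  have [[i ai] _] := HSE a Ea an0.
  by apply: le_trans ai _; apply: le_sD.
set sE := sup [set a | eigenvalue E a].
have sE_le : sE <= sD by apply: ge_sup; [by exists 0 | exact: ubE].
have sE_ge0 : 0 <= sE by apply: ub_le_sup => //; exists sD; exact: ubE.
have iD_ge0 : 0 <= inf [set a | eigenvalue D a /\ a != 0].
  by apply: inf_ge0 => a [Ha _]; exact: psd_eig_ge0 Dpsd Ha.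
rewrite /kappa /lambda_max /lambda_min_nz -/sD -/sE.
set SE' := [set a | eigenvalue E a /\ a != 0].
set SD' := [set a | eigenvalue D a /\ a != 0].
have [SE0|neE] := eqVneq SE' set0.
  by rewrite SE0 inf0 invr0 mulr0 divr_ge0.
have [a0 [Ea0 a0n0]] : SE' !=set0 by apply/set0P.
have hlbD : has_lbound SD'.
  by exists 0 => a [Ha _]; exact: psd_eig_ge0 Dpsd Ha.
have iD_le : inf SD' <= inf SE'.
  apply: lb_le_inf; first by apply/set0P.
  move=> a [Ea an0]; have [_ [j [dj0 dja]]] := HSE a Ea an0.
  apply: le_trans dja; apply: ge_inf => //; split => //.
pose m := \big[Order.min/1]_(i | d i != 0) d i.
have m_pos : 0 < m.
  apply: lt_bigmin => // i di0; rewrite lt_def di0 Hd //.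
have [_ [j0 [dj00 _]]] := HSE a0 Ea0 a0n0.
have iD_pos : 0 < inf SD'.
  apply: lt_le_trans m_pos _; apply: lb_le_inf; first by exists (d j0).
  move=> b [Db bn0]; have [k dk] := HSD b Db.
  by rewrite -dk; apply: bigmin_le_cond; rewrite dk.
have iE_pos : 0 < inf SE' := lt_le_trans iD_pos iD_le.
apply: (@le_trans _ _ (sD / inf SE')).
  apply: ler_wpM2r; [by rewrite invr_ge0 ltW | exact: sE_le].
apply: ler_wpM2l; first exact: sD_ge0.
rewrite lef_pV2 ?posrE; [exact: iD_le | exact: iE_pos | exact: iD_pos].
Qed.
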